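(* Let $E,E':\mathcal P N\times Ł_n^S\to Ł_n$ be homogeneous $Ł_n$-valued effectivity functions. Then $E=E'$ if and only if $E^\sharp=E'^\sharp$, where $E^\sharp$ denotes the restriction of $E$ to $\mathcal P N\times Ł_1^S$.
   Context: For a positive integer $n$ let $Ł_n=\{0,\frac1n,\dots,1\}$ with $\neg x=1-x$, $x\oplus y=\min(x+y,1)$, $x\odot y=\max(x+y-1,0)$, applied pointwise to functions in $Ł_n^S$. $Ł_1^S=\{0,1\}^S\subseteq Ł_n^S$. $N$ is a finite set, $S$ a set. An $Ł_n$-valued effectivity function is any map $E:\mathcal P N\times Ł_n^S\to Ł_n$; it is homogeneous if $E(C,f\oplus f)=E(C,f)\oplus E(C,f)$ and $E(C,f\odot f)=E(C,f)\odot E(C,f)$ for all $C\subseteq N$, $f\in Ł_n^S$. *)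

(* Defs.v *)
From mathcomp Require Import all_boot.
Set Implicit Arguments. Unset Strict Implicit. Unset Printing Implicit Defensive.

(* The MV-chain Ł_n = {0, 1/n, ..., 1} is represented by numerators:
   k : 'I_n.+1 stands for k/n. *)
Definition Luk (n : nat) := 'I_n.+1.

Definition lneg (n : nat) (x : Luk n) : Luk n := inord (n - x).
Definition loplus (n : nat) (x y : Luk n) : Luk n := inord (minn (x + y) n).
(* x ⊙ y = max(x + y - 1, 0)  (truncated subtraction on numerators) *)
Definition lodot (n : nat) (x y : Luk n) : Luk n := inord ((x + y) - n).

Definition foplus (n : nat) (S : Type) (f g : S -> Luk n) : S -> Luk n :=
  fun s => loplus (f s) (g s).
Definition fodot (n : nat) (S : Type) (f g : S -> Luk n) : S -> Luk n :=
  fun s => lodot (f s) (g s).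

Definition eff_fun (n : nat) (N : finType) (S : Type) :=
  {set N} -> (S -> Luk n) -> Luk n.

Definition homogeneous (n : nat) (N : finType) (S : Type) (E : eff_fun n N S) :=
  forall (C : {set N}) (f : S -> Luk n),
    E C (foplus f f) = loplus (E C f) (E C f) /\
    E C (fodot f f) = lodot (E C f) (E C f).

(* embedding Ł_1 = {0,1} into Ł_n *)
Definition bool_to_Luk (n : nat) (b : bool) : Luk n := if b then ord_max else ord0.

Definition sharp (n : nat) (N : finType) (S : Type) (E : eff_fun n N S) :
  {set N} -> (S -> bool) -> Luk n :=
  fun C g => E C (fun s => bool_to_Luk n (g s)).

(* Main.v *)
Require Import Defs.
From mathcomp Require Import all_boot.
From mathcomp Require Import zify.
From Stdlib Require Import FunctionalExtensionality.

Set Implicit Arguments. Unset Strict Implicit.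

Lemma val_lop n (x y : Luk n) : nat_of_ord (loplus x y) = minn (x + y) n.
Proof. rewrite /loplus inordK //; rewrite ltnS; apply: geq_minr. Qed.

Lemma val_lod n (x y : Luk n) : nat_of_ord (lodot x y) = (x + y) - n.
Proof.
rewrite /lodot inordK // ltnS.
have := ltn_ord x; have := ltn_ord y; lia.
Qed.

Definition iterD n m (x : Luk n) : Luk n := iter m (fun z => loplus z z) x.

Lemma val_iterD n m (x : Luk n) : nat_of_ord (iterD m x) = minn (2 ^ m * x) n.
Proof.
elim: m => [|m IH] /=.
  rewrite mul1n; apply/esym/minn_idPl; have := ltn_ord x; lia.
rewrite val_lop IH expnS. set p := 2 ^ m. lia.
Qed.

Lemma E_iterD n (N : finType) S (E : eff_fun n N S) C f m :
  homogeneous E -> E C (fun s => iterD m (f s)) = iterD m (E C f).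
Proof.
move=> hE; elim: m => [|m IH] //=.
by have [-> _] := hE C (fun s => iterD m (f s)); rewrite IH.
Qed.

Lemma zero_agree n (hn : 0 < n) (N : finType) S (E E' : eff_fun n N S) :
  homogeneous E -> homogeneous E' -> sharp E = sharp E' ->
  forall C f, (nat_of_ord (E C f) == 0) = (nat_of_ord (E' C f) == 0).
Proof.
move=> hE hE' hs C f.
have key : forall (x : Luk n), iterD n x = bool_to_Luk n (nat_of_ord x != 0).
  move=> x; apply: ord_inj; rewrite val_iterD /bool_to_Luk.
  have h2 : n <= 2 ^ n by apply: ltnW; apply: ltn_expl.
  case hx: (nat_of_ord x != 0) => /=.
    set p := 2 ^ n in h2 *; apply/minn_idPr; nia.
  move/negbFE/eqP: hx => hx. rewrite hx muln0 /=. lia.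
have e1 := @E_iterD _ _ _ E C f n hE; have e2 := @E_iterD _ _ _ E' C f n hE'.
have ef : (fun s => iterD n (f s)) = (fun s => bool_to_Luk n (nat_of_ord (f s) != 0)).
  by apply: functional_extensionality => s; rewrite key.
rewrite ef in e1 e2.
have : sharp E C (fun s => nat_of_ord (f s) != 0) = sharp E' C (fun s => nat_of_ord (f s) != 0)
  by rewrite hs.
rewrite /sharp e1 e2 !key /bool_to_Luk.
case: (nat_of_ord (E C f) =P 0); case: (nat_of_ord (E' C f) =P 0) => //= _ _ /(congr1 val) /=; lia.
Qed.

Lemma main_lemma n (N : finType) S (E E' : eff_fun n N S) :
  homogeneous E -> homogeneous E' ->
  (forall C f, (nat_of_ord (E C f) == 0) = (nat_of_ord (E' C f) == 0)) ->
  forall m C f, nat_of_ord (E C f) < nat_of_ord (E' C f) -> n - (nat_of_ord (E' C f) - nat_of_ord (E C f)) <= m -> False.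
Proof.
move=> hE hE' hz; elim=> [|m IH] C f.
  move=> hlt; have := ltn_ord (E' C f); move: (hz C f).
  case: eqP; case: eqP => //= *; lia.
move=> hlt hm.
have hb := ltn_ord (E' C f).
have [h1 h2] := hE C f; have [h1' h2'] := hE' C f.
case: (leqP (2 * nat_of_ord (E' C f)) n) => hb2.
  apply: (IH C (foplus f f)); rewrite h1 h1' !val_lop; lia.
case: (leqP n (2 * nat_of_ord (E C f))) => ha2.
  apply: (IH C (fodot f f)); rewrite h2 h2' !val_lod; lia.
have := hz C (fodot f f); rewrite h2 h2' !val_lod.
have -> : nat_of_ord (E C f) + nat_of_ord (E C f) - n = 0 by lia.
rewrite eqxx => /esym /eqP; lia.
Qed.

Theorem mainTheorem3 (n : nat) (hn : 0 < n) (N : finType) (S : Type)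
    (E E' : eff_fun n N S) :
  homogeneous E -> homogeneous E' ->
  (E = E' <-> sharp E = sharp E').
Proof.
move=> hE hE'; split; first by move=> ->.
move=> hs.
have hz := zero_agree hn hE hE' hs.
have hz' : forall C f, (nat_of_ord (E' C f) == 0) = (nat_of_ord (E C f) == 0) by move=> C f; rewrite hz.
apply: functional_extensionality => C; apply: functional_extensionality => f.
apply: ord_inj.
case: (ltngtP (nat_of_ord (E C f)) (nat_of_ord (E' C f))) => // h.
- by case: (@main_lemma _ _ _ E E' hE hE' hz (n - (nat_of_ord (E' C f) - nat_of_ord (E C f))) C f h (leqnn _)).
- by case: (@main_lemma _ _ _ E' E hE' hE hz' (n - (nat_of_ord (E C f) - nat_of_ord (E' C f))) C f h (leqnn _)).
Qed.
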